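(* Let $\theta=(\theta_1,\theta_2,\theta_3)\in\mathbb R^3\setminus\{0\}$ and let $m$ be a point on the boundary of the cube $[0,1]^3$ such that the billiard word $u=f_\theta(m)$ is well defined. Then $\delta_a(u)$ is a Sturmian word if and only if $\theta_2,\theta_3$ are linearly independent over $\mathbb Q$.
   Context: For $\theta$ and $m$ such that the line $m+\mathbb R\theta$ contains no point with more than one integer coordinate, the billiard word $f_\theta(m)\in\{a,b,c\}^{\mathbb N}$ records, in order, the successive intersections of the half line $m+\mathbb R_+\theta$ with the planes $X=n$ (letter $a$), $Y=n$ (letter $b$), $Z=n$ (letter $c$), $n\in\mathbb Z$ (this is the coding of the billiard trajectory in the unit cube, opposite faces carrying the same letter). $\delta_a$ denotes the map erasing all occurrences of the letter $a$ in a word. *)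

(* Defs.v *)
From Stdlib Require Import Reals QArith Qreals List ClassicalEpsilon.
Open Scope R_scope.

(** Alphabet {a,b,c}: letter a <-> planes X=n, b <-> Y=n, c <-> Z=n. *)
Inductive letter : Type := la | lb | lc.

Definition R3 := (R * R * R)%type.

Definition coord (p : R3) (l : letter) : R :=
  match p, l with
  | (x, _, _), la => x
  | (_, y, _), lb => y
  | (_, _, z), lc => z
  end.

Definition is_int (x : R) : Prop := exists n : Z, x = IZR n.

Definition hits (theta m : R3) (t : R) (l : letter) : Prop :=
  is_int (coord m l + t * coord theta l).

Definition billiard_well_defined (theta m : R3) : Prop :=
  forall (t : R) (l1 l2 : letter), l1 <> l2 ->
    hits theta m t l1 -> hits theta m t l2 -> False.

(** [u] is the billiard word of the half line m + R_+ theta (R_+ = [0,+oo)):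
    there is a strictly increasing enumeration T of all the times t >= 0
    at which the half line meets a plane X=n / Y=n / Z=n, and u k is the
    letter of the plane met at time T k. *)
Definition is_billiard_word (theta m : R3) (u : nat -> letter) : Prop :=
  exists T : nat -> R,
    (forall k, T k < T (S k)) /\
    (forall k, 0 <= T k) /\
    (forall k, hits theta m (T k) (u k)) /\
    (forall (t : R) (l : letter), 0 <= t -> hits theta m t l ->
        exists k, T k = t).

Definition inhabited_word : inhabited (nat -> letter) := inhabits (fun _ => la).

(** f_theta(m) (meaningful when the billiard word is well defined). *)
Definition billiard_word (theta m : R3) : nat -> letter :=
  epsilon inhabited_word (is_billiard_word theta m).

Fixpoint count_nona (u : nat -> letter) (j : nat) : nat :=
  match j with
  | O => O
  | S j' => count_nona u j' + (match u j' with la => 0 | _ => 1 end)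
  end%nat.

(** [w] is the infinite word delta_a(u) (obtained by erasing all the a's of u);
    no such w exists when u has only finitely many letters different from a,
    i.e. when delta_a(u) is finite. *)
Definition erase_a (u w : nat -> letter) : Prop :=
  forall k : nat, exists j : nat,
    u j <> la /\ count_nona u j = k /\ w k = u j.

Definition factor (w : nat -> letter) (i n : nat) : list letter :=
  map (fun k => w (i + k)%nat) (seq 0 n).

Definition complexity_is (w : nat -> letter) (n p : nat) : Prop :=
  exists L : list (list letter),
    NoDup L /\ length L = p /\
    (forall x, In x L <-> exists i, x = factor w i n).

Definition sturmian (w : nat -> letter) : Prop :=
  forall n : nat, complexity_is w n (S n).

Definition delta_a_sturmian (u : nat -> letter) : Prop :=
  exists w, erase_a u w /\ sturmian w.

Definition on_cube_boundary (m : R3) : Prop :=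
  (forall l, 0 <= coord m l <= 1) /\
  (exists l, coord m l = 0 \/ coord m l = 1).

Definition Q_lin_indep (x y : R) : Prop :=
  forall p q : Q, Q2R p * x + Q2R q * y = 0 -> (p == 0)%Q /\ (q == 0)%Q.

(* Main.v *)
Require Import Defs.
From Stdlib Require Import Reals QArith Qreals List ClassicalEpsilon Lra Lia ZArith.
Open Scope R_scope.
Open Scope R_scope.

Definition fl (x : R) : Z := Int_part x.
Definition fr (x : R) : R := x - IZR (fl x).

Lemma fl_spec x : IZR (fl x) <= x < IZR (fl x) + 1.
Proof. unfold fl. destruct (base_Int_part x). lra. Qed.

Lemma fl_unique x z : IZR z <= x < IZR z + 1 -> fl x = z.
Proof.
  intros [H1 H2]. unfold fl, Int_part.
  assert (up x = (z + 1)%Z). { symmetry. apply tech_up; rewrite plus_IZR; simpl; lra. }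
  lia.
Qed.

Lemma fl_shift x n : fl (x + IZR n) = (fl x + n)%Z.
Proof. apply fl_unique. rewrite plus_IZR. pose proof (fl_spec x). lra. Qed.

Lemma fl_IZR n : fl (IZR n) = n.
Proof. apply fl_unique. lra. Qed.

Lemma fl_lt_IZR x n : x < IZR n -> (fl x < n)%Z.
Proof. intros H. pose proof (fl_spec x). apply lt_IZR. lra. Qed.

Lemma IZR_le_fl x n : IZR n <= x -> (n <= fl x)%Z.
Proof. intros H. pose proof (fl_spec x).
  assert (n < fl x + 1)%Z. { apply lt_IZR. rewrite plus_IZR. simpl. lra. } lia. Qed.

Lemma fl_mono x y : x <= y -> (fl x <= fl y)%Z.
Proof. intros H. apply IZR_le_fl. pose proof (fl_spec x). lra. Qed.

Lemma fr_range x : 0 <= fr x < 1.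
Proof. unfold fr. pose proof (fl_spec x). lra. Qed.

Lemma fr_shift x n : fr (x + IZR n) = fr x.
Proof. unfold fr. rewrite fl_shift, plus_IZR. ring. Qed.

Lemma fr_unique x n : IZR n <= x < IZR n + 1 -> fr x = x - IZR n.
Proof. intros H. unfold fr. rewrite (fl_unique x n H). auto. Qed.



Lemma is_int_fl x : is_int x <-> IZR (fl x) = x.
Proof. split. intros [n ->]. rewrite fl_IZR. auto. intros H. exists (fl x). auto. Qed.

Definition cl (x : R) : Z := (- fl (- x))%Z.

Lemma cl_int x : is_int x -> cl x = fl x.
Proof. intros [n ->]. unfold cl. rewrite <- opp_IZR, !fl_IZR. lia. Qed.

Lemma cl_nonint x : ~ is_int x -> cl x = (fl x + 1)%Z.
Proof. intros H. unfold cl. pose proof (fl_spec x).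
  assert (IZR (fl x) <> x) by (intro E; apply H; exists (fl x); auto).
  assert (fl (-x) = (- fl x - 1)%Z). { apply fl_unique. rewrite minus_IZR, opp_IZR. simpl. lra. }
  lia. Qed.

Lemma cl_spec x : IZR (cl x) - 1 < x <= IZR (cl x).
Proof. unfold cl. rewrite opp_IZR. pose proof (fl_spec (-x)). lra. Qed.

Lemma cl_mono x y : x <= y -> (cl x <= cl y)%Z.
Proof. intros. unfold cl. assert (-y <= -x) by lra. pose proof (fl_mono _ _ H0). lia. Qed.
Open Scope R_scope.

Fixpoint sumZ (f : nat -> Z) (m : nat) : Z :=
  match m with O => 0%Z | S m' => (sumZ f m' + f m')%Z end.

Lemma sumZ_le f g m : (forall j, (j < m)%nat -> (f j <= g j)%Z) -> (sumZ f m <= sumZ g m)%Z.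
Proof. induction m; simpl; intros H. lia. pose proof (H m ltac:(lia)). pose proof (IHm (fun j Hj => H j ltac:(lia))). lia. Qed.

Lemma sumZ_le_eq f g m : (forall j, (j < m)%nat -> (f j <= g j)%Z) -> sumZ f m = sumZ g m ->
  forall j, (j < m)%nat -> f j = g j.
Proof. induction m; simpl; intros H E j Hj. lia.
  pose proof (H m ltac:(lia)). pose proof (sumZ_le f g m (fun j Hj => H j ltac:(lia))).
  assert (f m = g m) by lia.
  destruct (Nat.eq_dec j m). subst; auto.
  apply IHm; auto. lia. lia. Qed.

Lemma sumZ_lt f g m k : (forall j, (j < m)%nat -> (f j <= g j)%Z) -> (k < m)%nat -> (f k < g k)%Z ->
  (sumZ f m < sumZ g m)%Z.
Proof. intros H Hk Hfk. destruct (Z.eq_dec (sumZ f m) (sumZ g m)) as [E|NE].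
  - pose proof (sumZ_le_eq f g m H E k Hk). lia.
  - pose proof (sumZ_le f g m H). lia. Qed.

Lemma sumZ_ext f g m : (forall j, (j < m)%nat -> f j = g j) -> sumZ f m = sumZ g m.
Proof. induction m; simpl; intros H. auto. rewrite IHm, H; auto. Qed.

Lemma sumZ_bound f : (forall j, (0 <= f j <= 1)%Z) -> f O = 0%Z -> forall m, (0 <= sumZ f (S m) <= Z.of_nat m)%Z.
Proof. intros H H0 m. induction m. simpl. lia. change (sumZ f (S (S m))) with (sumZ f (S m) + f (S m))%Z.
  pose proof (H (S m)). lia. Qed.

Definition letter_of (al y : R) : letter :=
  if Z.eq_dec (fl (y + al)) (fl y) then lc else lb.

Definition Hd (al : R) (j : nat) (y : R) : Z := (fl (y + INR j * al) - fl y)%Z.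

Lemma fl_step al z : 0 < al < 1 -> fl (z + al) = fl z \/ fl (z + al) = (fl z + 1)%Z.
Proof. intros Ha. pose proof (fl_spec z). destruct (Rlt_dec (z + al) (IZR (fl z) + 1)).
  left. apply fl_unique. lra. right. apply fl_unique. rewrite plus_IZR. simpl. lra. Qed.

Lemma Hd_step al j y : 0 < al < 1 -> Hd al (S j) y = Hd al j y \/ Hd al (S j) y = (Hd al j y + 1)%Z.
Proof. intros Ha. unfold Hd. rewrite S_INR. replace (y + (INR j + 1) * al) with ((y + INR j * al) + al) by ring.
  destruct (fl_step al (y + INR j * al) Ha); lia. Qed.

Lemma letter_H al k y : letter_of al (y + INR k * al) = if Z.eq_dec (Hd al (S k) y) (Hd al k y) then lc else lb.
Proof. unfold letter_of, Hd. rewrite S_INR. replace (y + (INR k + 1) * al) with ((y + INR k * al) + al) by ring.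
  destruct (Z.eq_dec (fl (y + INR k * al + al)) (fl (y + INR k * al)));
  destruct (Z.eq_dec (fl (y + INR k * al + al) - fl y) (fl (y + INR k * al) - fl y)); auto; lia. Qed.

Definition Fn (al : R) (n : nat) (y : R) : list letter :=
  map (fun k => letter_of al (y + INR k * al)) (seq 0 n).

Lemma nth_Fn al n y j : (j < n)%nat -> nth j (Fn al n y) la = letter_of al (y + INR j * al).
Proof. intros Hj. unfold Fn.
  rewrite (nth_indep _ la (letter_of al (y + INR 0 * al))) by (rewrite length_map, length_seq; auto).
  rewrite (map_nth (fun k => letter_of al (y + INR k * al))). rewrite seq_nth by exact Hj. auto. Qed.

Lemma Fn_of_H al n y y' : (forall j, (j <= n)%nat -> Hd al j y = Hd al j y') -> Fn al n y = Fn al n y'.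
Proof. intros H. unfold Fn. apply map_ext_in. intros k Hk. apply in_seq in Hk.
  rewrite !letter_H. rewrite (H k), (H (S k)) by lia. auto. Qed.

Lemma H_of_Fn al n y y' : 0 < al < 1 -> Fn al n y = Fn al n y' -> forall j, (j <= n)%nat -> Hd al j y = Hd al j y'.
Proof. intros Ha E j. induction j; intros Hj.
  - unfold Hd. simpl. rewrite Rmult_0_l, !Rplus_0_r. lia.
  - assert (L : letter_of al (y + INR j * al) = letter_of al (y' + INR j * al)).
    { rewrite <- (nth_Fn al n y j), <- (nth_Fn al n y' j) by lia. rewrite E. auto. }
    rewrite !letter_H in L. rewrite IHj in L by lia.
    destruct (Hd_step al j y Ha); destruct (Hd_step al j y' Ha);
    destruct (Z.eq_dec (Hd al (S j) y) (Hd al j y')); destruct (Z.eq_dec (Hd al (S j) y') (Hd al j y'));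
    try discriminate; rewrite IHj in * by lia; lia. Qed.

Definition E (al : R) (j : nat) (y : R) : Z :=
  if Rle_dec 1 (fr y + fr (INR j * al)) then 1%Z else 0%Z.

Lemma fr_decomp x : x = IZR (fl x) + fr x.
Proof. unfold fr. ring. Qed.

Lemma H_E al j y : Hd al j y = (fl (INR j * al) + E al j y)%Z.
Proof. unfold Hd, E.
  pose proof (fr_range y). pose proof (fr_range (INR j * al)).
  replace (y + INR j * al) with ((fr y + fr (INR j * al)) + IZR (fl y + fl (INR j * al))).
  2:{ rewrite plus_IZR. rewrite (fr_decomp y) at 3. rewrite (fr_decomp (INR j * al)) at 3. ring. }
  rewrite fl_shift. destruct (Rle_dec 1 (fr y + fr (INR j * al))).
  - rewrite (fl_unique _ 1%Z) by lra. lia.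
  - rewrite (fl_unique _ 0%Z) by lra. lia. Qed.

Lemma E_range al j y : (0 <= E al j y <= 1)%Z.
Proof. unfold E. destruct Rle_dec; lia. Qed.

Lemma fr_0 : fr 0 = 0.
Proof. unfold fr. rewrite fl_IZR. ring. Qed.

Lemma E_0 al y : E al 0 y = 0%Z.
Proof. unfold E. simpl. rewrite Rmult_0_l, fr_0. pose proof (fr_range y). destruct Rle_dec; lra || auto. Qed.

Lemma E_mono al j y y' : fr y <= fr y' -> (E al j y <= E al j y')%Z.
Proof. unfold E. intros. destruct Rle_dec; destruct Rle_dec; lia || lra. Qed.

Definition sumE al n y : Z := sumZ (fun j => E al j y) (S n).

Definition irr (al : R) : Prop := forall j n : Z, j <> 0%Z -> IZR j * al <> IZR n.

Lemma fr_Fn_sum al n y y' : 0 < al < 1 -> fr y <= fr y' ->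
  sumE al n y = sumE al n y' -> Fn al n y = Fn al n y'.
Proof. intros Ha Hf Hs. apply Fn_of_H. intros j Hj. rewrite !H_E.
  rewrite (sumZ_le_eq (fun j => E al j y) (fun j => E al j y') (S n)); auto.
  intros; apply E_mono; auto. lia. Qed.

Lemma Fn_sum al n y y' : 0 < al < 1 -> Fn al n y = Fn al n y' <-> sumE al n y = sumE al n y'.
Proof. intros Ha. split.
  - intros E0. unfold sumE. apply sumZ_ext. intros j Hj.
    pose proof (H_of_Fn al n y y' Ha E0 j ltac:(lia)). rewrite !H_E in H. lia.
  - intros Hs. destruct (Rle_dec (fr y) (fr y')).
    + apply fr_Fn_sum; auto.
    + symmetry. apply fr_Fn_sum; auto. lra. Qed.

Lemma sumE_bound al n y : (0 <= sumE al n y <= Z.of_nat n)%Z.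
Proof. unfold sumE. apply sumZ_bound. intros; apply E_range. apply E_0. Qed.

Definition tt (al : R) (j : nat) : R := fr (- INR j * al).

Lemma INR_IZR n : INR n = IZR (Z.of_nat n).
Proof. apply INR_IZR_INZ. Qed.

Lemma fr_pos al j : irr al -> (1 <= j)%nat -> 0 < fr (INR j * al).
Proof. intros Hi Hj. pose proof (fr_range (INR j * al)).
  destruct (Req_dec (fr (INR j * al)) 0) as [E0|]; [|lra].
  exfalso. unfold fr in E0. apply (Hi (Z.of_nat j) (fl (INR j * al))). lia.
  rewrite <- INR_IZR. lra. Qed.

Lemma tt_pos al j : irr al -> (1 <= j)%nat -> tt al j = 1 - fr (INR j * al).
Proof. intros Hi Hj. pose proof (fr_pos al j Hi Hj). pose proof (fr_range (INR j * al)).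
  unfold tt. replace (- INR j * al) with ((1 - fr (INR j * al)) + IZR (- fl (INR j * al) - 1)).
  rewrite fr_shift. rewrite (fr_unique _ 0) by (simpl; lra). simpl; ring.
  rewrite minus_IZR, opp_IZR. unfold fr. ring. Qed.

Lemma tt_0 al : tt al 0 = 0.
Proof. unfold tt. simpl. replace (-0 * al) with 0 by ring. apply fr_0. Qed.

Lemma tt_range al j : 0 <= tt al j < 1.
Proof. apply fr_range. Qed.

Lemma tt_inj al j k : irr al -> tt al j = tt al k -> j = k.
Proof. intros Hi E0. unfold tt, fr in E0. destruct (Nat.eq_dec j k); auto. exfalso.
  apply (Hi (Z.of_nat k - Z.of_nat j)%Z (fl (- INR j * al) - fl (- INR k * al))%Z). lia.
  rewrite !minus_IZR, <- !INR_IZR. lra. Qed.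

Lemma E_one al j y : irr al -> (1 <= j)%nat -> (E al j y = 1%Z <-> tt al j <= fr y).
Proof. intros Hi Hj. rewrite tt_pos by auto. unfold E. destruct Rle_dec; split; intros; lra || lia. Qed.

Lemma pigeon N (f : nat -> nat) : (forall k, (k <= N)%nat -> (f k < N)%nat) ->
  exists k1 k2, (k1 < k2 <= N)%nat /\ f k1 = f k2.
Proof. intros Hf. apply NNPP. intros Hn.
  assert (ND : NoDup (map f (seq 0 (S N)))).
  { apply NoDup_map_NoDup_ForallPairs; [|apply seq_NoDup].
    intros x y Hx Hy Exy. apply in_seq in Hx, Hy.
    destruct (lt_eq_lt_dec x y) as [[Hlt|Heq]|Hgt]; auto; exfalso; apply Hn.
    exists x, y. split; auto; lia. exists y, x. split; auto; lia. }
  assert (I : incl (map f (seq 0 (S N))) (seq 0 N)).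
  { intros z Hz. apply in_map_iff in Hz. destruct Hz as [x [<- Hx]]. apply in_seq in Hx.
    apply in_seq. pose proof (Hf x ltac:(lia)). lia. }
  pose proof (NoDup_incl_length ND I). rewrite length_map, !length_seq in H. lia. Qed.

Lemma smallq al eps : 0 < al < 1 -> irr al -> 0 < eps ->
  exists q, (1 <= q)%nat /\ 0 < fr (INR q * al) /\ (fr (INR q * al) < eps \/ 1 - eps < fr (INR q * al)).
Proof. intros Ha Hi He.
  pose proof (archimed (/ eps)) as [Hu1 _].
  assert (Hinv : 0 < / eps) by (apply Rinv_0_lt_compat; lra).
  assert (Hup : (0 < up (/ eps))%Z) by (apply lt_IZR; simpl; lra).
  set (N := Z.to_nat (up (/ eps))).
  assert (HN : INR N = IZR (up (/ eps))) by (unfold N; rewrite INR_IZR, Z2Nat.id; [reflexivity|lia]).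
  assert (HNe : 1 < INR N * eps).
  { rewrite HN. apply Rmult_lt_compat_r with (r := eps) in Hu1; auto.
    rewrite Rinv_l in Hu1; lra. }
  assert (HN0 : 0 < INR N) by lra.
  set (bin := fun k => Z.to_nat (fl (INR N * fr (INR k * al)))).
  destruct (pigeon N bin) as [k1 [k2 [Hk Hb]]].
  { intros k _. unfold bin. pose proof (fr_range (INR k * al)). pose proof (pos_INR N).
    assert (0 <= INR N * fr (INR k * al) < INR N) by (split; nra).
    pose proof (fl_spec (INR N * fr (INR k * al))).
    assert (0 <= fl (INR N * fr (INR k * al)))%Z by (apply IZR_le_fl; lra).
    assert (fl (INR N * fr (INR k * al)) < Z.of_nat N)%Z by (apply fl_lt_IZR; rewrite <- INR_IZR; lra).
    lia. }
  unfold bin in Hb.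
  pose proof (fr_range (INR k1 * al)). pose proof (fr_range (INR k2 * al)). pose proof (pos_INR N).
  set (f1 := fr (INR k1 * al)) in *. set (f2 := fr (INR k2 * al)) in *.
  assert (0 <= fl (INR N * f1))%Z by (apply IZR_le_fl; nra).
  assert (0 <= fl (INR N * f2))%Z by (apply IZR_le_fl; nra).
  assert (Efl : fl (INR N * f1) = fl (INR N * f2)) by lia.
  pose proof (fl_spec (INR N * f1)) as S1. pose proof (fl_spec (INR N * f2)) as S2.
  rewrite Efl in S1.
  set (d := f2 - f1).
  assert (Hd1 : INR N * d < 1) by (unfold d; nra).
  assert (Hd2 : INR N * d > -1) by (unfold d; nra).
  assert (Hde : - eps < d < eps) by (split; nra).
  assert (Hd1' : -1 < d < 1) by (unfold d; lra).
  exists (k2 - k1)%nat. split. lia.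
  assert (Eq : INR (k2 - k1) * al = d + IZR (fl (INR k2 * al) - fl (INR k1 * al))).
  { rewrite minus_INR by lia. rewrite minus_IZR. unfold d, f1, f2, fr. ring. }
  assert (Hpos : 0 < fr (INR (k2 - k1) * al)) by (apply fr_pos; auto; lia).
  split; auto.
  destruct (Rle_dec 0 d).
  - left. rewrite Eq, fr_shift. rewrite (fr_unique d 0) by (simpl; lra). simpl. lra.
  - right. replace (d + IZR (fl (INR k2 * al) - fl (INR k1 * al))) with ((d + 1) + IZR (fl (INR k2 * al) - fl (INR k1 * al) - 1)) in Eq
      by (rewrite !minus_IZR; ring).
    rewrite Eq, fr_shift. rewrite (fr_unique (d + 1) 0) by (simpl; lra). simpl. lra. Qed.

Lemma stepK x d : 0 < d -> 0 <= x -> exists K : nat, x < INR K * d <= x + d.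
Proof. intros Hd Hx. pose proof (archimed (x / d)) as [H1 H2].
  assert (0 <= x / d) by (unfold Rdiv; apply Rmult_le_pos; [lra|left; apply Rinv_0_lt_compat; lra]).
  assert (Hup : (0 < up (x / d))%Z) by (apply lt_IZR; simpl; lra).
  exists (Z.to_nat (up (x / d))). rewrite INR_IZR, Z2Nat.id by lia.
  assert (E1 : x = (x / d) * d) by (field; lra).
  split; [rewrite E1 at 1|]; nra. Qed.

Lemma fr_rot al rho q K : fr (rho + INR (K * q) * al) = fr (fr rho + INR K * fr (INR q * al)).
Proof. replace (rho + INR (K * q) * al) with ((fr rho + INR K * fr (INR q * al)) + IZR (fl rho + Z.of_nat K * fl (INR q * al))).
  apply fr_shift. rewrite plus_IZR, mult_IZR, <- INR_IZR, mult_INR. unfold fr. ring. Qed.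

Lemma dens al rho a eps : 0 < al < 1 -> irr al -> 0 <= a -> 0 < eps -> a + eps <= 1 ->
  exists i, a <= fr (rho + INR i * al) < a + eps.
Proof. intros Ha Hi Ha0 He Hae.
  destruct (smallq al eps Ha Hi He) as [q [Hq [Hpos [HA|HB]]]].
  - set (d := fr (INR q * al)) in *. pose proof (fr_range rho). set (f0 := fr rho) in *.
    destruct (Rle_dec f0 a).
    + destruct (stepK (a - f0) d Hpos ltac:(lra)) as [K HK]. exists (K * q)%nat.
      rewrite fr_rot. fold d f0. rewrite (fr_unique _ 0) by (simpl; lra). simpl. lra.
    + destruct (stepK (a + 1 - f0) d Hpos ltac:(lra)) as [K HK]. exists (K * q)%nat.
      rewrite fr_rot. fold d f0. rewrite (fr_unique _ 1) by (simpl; lra). simpl. lra.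
  - pose proof (fr_range (INR q * al)). set (d := fr (INR q * al)) in *. pose proof (fr_range rho). set (f0 := fr rho) in *.
    set (d' := 1 - d).
    assert (Hd' : 0 < d' < eps) by (unfold d'; lra).
    assert (Rw : forall K, fr (rho + INR (K * q) * al) = fr (f0 - INR K * d')).
    { intros K. rewrite fr_rot. fold d f0. rewrite <- (fr_shift (f0 - INR K * d') (Z.of_nat K)).
      f_equal. rewrite <- INR_IZR. unfold d'. ring. }
    destruct (Rle_dec a f0); [destruct (Rlt_dec f0 (a + eps))|].
    + exists 0%nat. simpl. rewrite Rmult_0_l, Rplus_0_r. fold f0. lra.
    + destruct (stepK (f0 - (a + eps)) d' ltac:(lra) ltac:(lra)) as [K HK]. exists (K * q)%nat.
      rewrite Rw. rewrite (fr_unique _ 0) by (simpl; lra). simpl. lra.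
    + destruct (stepK (f0 - (a + eps - 1)) d' ltac:(lra) ltac:(lra)) as [K HK]. exists (K * q)%nat.
      rewrite Rw. rewrite (fr_unique _ (-1)) by (simpl; lra). simpl. lra. Qed.

Lemma min1 (g : nat -> R) N : (forall j, (j <= N)%nat -> 0 < g j) ->
  exists e, 0 < e /\ forall j, (j <= N)%nat -> e <= g j.
Proof. induction N; intros H.
  - exists (g 0%nat). split. apply H; lia. intros j Hj. replace j with 0%nat by lia. lra.
  - destruct (IHN (fun j Hj => H j ltac:(lia))) as [e [He He']].
    exists (Rmin e (g (S N))). split. { apply Rmin_glb_lt; [auto|apply H; lia]. }
    intros j Hj. destruct (Nat.eq_dec j (S N)). subst. apply Rmin_r.
    eapply Rle_trans. apply Rmin_l. apply He'. lia. Qed.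

Lemma min2 (f : nat -> nat -> R) N : (forall j k, (j <= N)%nat -> (k <= N)%nat -> 0 < f j k) ->
  exists e, 0 < e /\ forall j k, (j <= N)%nat -> (k <= N)%nat -> e <= f j k.
Proof. induction N; intros H.
  - exists (f 0%nat 0%nat). split. apply H; lia. intros j k Hj Hk. replace j with 0%nat by lia. replace k with 0%nat by lia. lra.
  - destruct (IHN (fun j k Hj Hk => H j k ltac:(lia) ltac:(lia))) as [e [He He']].
    destruct (min1 (fun k => f (S N) k) (S N) (fun k Hk => H (S N) k ltac:(lia) Hk)) as [e1 [He1 He1']].
    destruct (min1 (fun j => f j (S N)) (S N) (fun j Hj => H j (S N) Hj ltac:(lia))) as [e2 [He2 He2']].
    exists (Rmin e (Rmin e1 e2)). split. repeat apply Rmin_glb_lt; auto.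
    intros j k Hj Hk. destruct (Nat.eq_dec j (S N)). subst.
    eapply Rle_trans. apply Rmin_r. eapply Rle_trans. apply Rmin_l. apply He1'. auto.
    destruct (Nat.eq_dec k (S N)). subst.
    eapply Rle_trans. apply Rmin_r. eapply Rle_trans. apply Rmin_r. apply He2'. auto.
    eapply Rle_trans. apply Rmin_l. apply He'; lia. Qed.

Lemma letter_eq_dec (x y : letter) : {x = y} + {x <> y}.
Proof. decide equality. Defined.

Theorem rot_sturm al rho (w : nat -> letter) : 0 < al < 1 -> irr al ->
  (forall k, w k = letter_of al (rho + INR k * al)) -> sturmian w.
Proof. intros Ha Hi Hw n.
  set (y := fun i => rho + INR i * al).
  assert (Hf : forall i, factor w i n = Fn al n (y i)).
  { intros i. unfold factor, Fn. apply map_ext. intros k. rewrite Hw. f_equal. unfold y. rewrite plus_INR. ring. }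
  set (f := fun j k => Rmin (1 - tt al j) (if Rlt_dec (tt al j) (tt al k) then tt al k - tt al j else 1)).
  destruct (min2 f n) as [e [He He']].
  { intros j k _ _. unfold f. pose proof (tt_range al j). apply Rmin_glb_lt. lra. destruct Rlt_dec; lra. }
  assert (Hex : forall j, exists i, (j <= n)%nat -> tt al j <= fr (y i) < tt al j + e).
  { intros j. destruct (le_dec j n) as [Hj|Hj].
    - pose proof (He' j j Hj Hj). unfold f in H. pose proof (Rmin_l (1 - tt al j) (if Rlt_dec (tt al j) (tt al j) then tt al j - tt al j else 1)).
      pose proof (tt_range al j).
      destruct (dens al rho (tt al j) e Ha Hi ltac:(lra) He ltac:(lra)) as [i Hi']. exists i. intros _. exact Hi'.
    - exists 0%nat. intros; lia. }
  assert (Hpick : exists pick : nat -> nat, forall j, (j <= n)%nat -> tt al j <= fr (y (pick j)) < tt al j + e).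
  { exists (fun j => proj1_sig (constructive_indefinite_description _ (Hex j))).
    intros j. exact (proj2_sig (constructive_indefinite_description _ (Hex j))). }
  destruct Hpick as [pick Hp].
  assert (Dlt : forall j k, (j <= n)%nat -> (k <= n)%nat -> tt al j < tt al k ->
            (sumE al n (y (pick j)) < sumE al n (y (pick k)))%Z).
  { intros j k Hj Hk Hlt.
    assert (Hk1 : (1 <= k)%nat). { destruct k. rewrite tt_0 in Hlt. pose proof (tt_range al j). lra. lia. }
    pose proof (He' j k Hj Hk) as Hjk. unfold f in Hjk. destruct Rlt_dec; [|lra].
    pose proof (Rmin_r (1 - tt al j) (tt al k - tt al j)).
    pose proof (Hp j Hj). pose proof (Hp k Hk).
    unfold sumE. apply (sumZ_lt _ _ _ k).
    - intros; apply E_mono. lra.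
    - lia.
    - pose proof (proj2 (E_one al k (y (pick k)) Hi Hk1) ltac:(lra)).
      pose proof (E_range al k (y (pick j))).
      assert (E al k (y (pick j)) <> 1%Z) by (intro E1; apply (E_one al k _ Hi Hk1) in E1; lra).
      lia. }
  assert (Dne : forall j k, (j <= n)%nat -> (k <= n)%nat -> j <> k ->
            sumE al n (y (pick j)) <> sumE al n (y (pick k))).
  { intros j k Hj Hk Hjk.
    assert (tt al j <> tt al k) by (intro E0; apply Hjk; eapply tt_inj; eauto).
    destruct (Rlt_dec (tt al j) (tt al k)). pose proof (Dlt j k Hj Hk r). lia.
    assert (tt al k < tt al j) by lra. pose proof (Dlt k j Hk Hj H0). lia. }
  set (L := map (fun j => factor w (pick j) n) (seq 0 (S n))).
  assert (NDs : NoDup (map (fun j => sumE al n (y (pick j))) (seq 0 (S n)))).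
  { apply NoDup_map_NoDup_ForallPairs; [|apply seq_NoDup].
    intros a b Ha' Hb' Eab. apply in_seq in Ha', Hb'. destruct (Nat.eq_dec a b); auto.
    exfalso. apply (Dne a b); auto; lia. }
  exists L. split; [|split].
  - apply NoDup_map_NoDup_ForallPairs; [|apply seq_NoDup].
    intros a b Ha' Hb' Eab. apply in_seq in Ha', Hb'. destruct (Nat.eq_dec a b); auto.
    exfalso. apply (Dne a b); try lia; auto. rewrite !Hf in Eab. apply Fn_sum; auto.
  - unfold L. rewrite length_map, length_seq. auto.
  - intros x. split.
    + intros Hx. unfold L in Hx. apply in_map_iff in Hx. destruct Hx as [j [<- _]]. eauto.
    + intros [i ->]. destruct (in_dec (list_eq_dec letter_eq_dec) (factor w i n) L) as [Hin|Hnin]; auto.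
      exfalso.
      set (Zs := sumE al n (y i) :: map (fun j => sumE al n (y (pick j))) (seq 0 (S n))).
      assert (NDZ : NoDup Zs).
      { constructor; auto. intros Hin. apply in_map_iff in Hin. destruct Hin as [j [Ej Hj]].
        apply Hnin. unfold L. apply in_map_iff. exists j. split; auto.
        rewrite !Hf. apply Fn_sum; auto. }
      assert (IZ : incl Zs (map Z.of_nat (seq 0 (S n)))).
      { intros v Hv. apply in_map_iff.
        assert (Hb : (0 <= v <= Z.of_nat n)%Z).
        { destruct Hv as [<-|Hv]. apply sumE_bound. apply in_map_iff in Hv. destruct Hv as [j [<- _]]. apply sumE_bound. }
        exists (Z.to_nat v). split. lia. apply in_seq. lia. }
      pose proof (NoDup_incl_length NDZ IZ) as HH.
      assert (length Zs = S (S n)) as HZ by (unfold Zs; cbn [length]; rewrite length_map, length_seq; reflexivity).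
      rewrite HZ, length_map, length_seq in HH. lia. Qed.

Theorem periodic_not_sturm (w : nat -> letter) J : (1 <= J)%nat -> (forall k, w (k + J)%nat = w k) -> ~ sturmian w.
Proof. intros HJ Hp Hs. destruct (Hs J) as [L [ND [Hl HL]]].
  assert (Hper : forall q r, w (r + q * J)%nat = w r).
  { induction q; intros r. f_equal; lia. replace (r + S q * J)%nat with ((r + q * J) + J)%nat by lia. rewrite Hp. auto. }
  assert (I : incl L (map (fun i => factor w i J) (seq 0 J))).
  { intros x Hx. apply HL in Hx. destruct Hx as [i ->]. apply in_map_iff. exists (i mod J). split.
    - unfold factor. apply map_ext. intros k. rewrite <- (Hper (i / J)%nat ((i mod J) + k)%nat). f_equal.
      pose proof (Nat.div_mod_eq i J). lia.
    - apply in_seq. pose proof (Nat.mod_upper_bound i J ltac:(lia)). lia. }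
  pose proof (NoDup_incl_length ND I). rewrite Hl, length_map, length_seq in H. lia. Qed.
Open Scope R_scope.

Definition sg (x : R) : Z := if Rle_dec 0 x then 1%Z else (-1)%Z.
Definition vel (th : R3) (l : letter) : R := IZR (sg (coord th l)) * coord th l.
Definition P (th m : R3) (l : letter) (t : R) : R := IZR (sg (coord th l)) * (coord m l + t * coord th l).

Lemma sg_sq x : IZR (sg x) * IZR (sg x) = 1.
Proof. unfold sg. destruct Rle_dec; simpl; ring. Qed.

Lemma sg_ne x : sg x <> 0%Z.
Proof. unfold sg. destruct Rle_dec; lia. Qed.

Lemma vel_pos th l : coord th l <> 0 -> 0 < vel th l.
Proof. unfold vel, sg. destruct Rle_dec; simpl; lra. Qed.

Lemma P_lin th m l t : P th m l t = P th m l 0 + vel th l * t.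
Proof. unfold P, vel. ring. Qed.

Lemma is_int_opp x : is_int (- x) <-> is_int x.
Proof. split; intros [n Hn]; exists (- n)%Z; rewrite opp_IZR; lra. Qed.

Lemma hits_P th m t l : hits th m t l <-> is_int (P th m l t).
Proof. unfold hits, P, sg. destruct Rle_dec; simpl.
  - rewrite Rmult_1_l. tauto.
  - replace (-1 * (coord m l + t * coord th l)) with (- (coord m l + t * coord th l)) by ring.
    rewrite is_int_opp. tauto. Qed.

Lemma th_nonzero (th : R3) : th <> (0, 0, 0) -> exists l, coord th l <> 0.
Proof. destruct th as [[a b] c]. intros H.
  destruct (Req_dec a 0); destruct (Req_dec b 0); destruct (Req_dec c 0); subst.
  all: try (exfalso; apply H; reflexivity).
  all: first [exists la; simpl; assumption | exists lb; simpl; assumption | exists lc; simpl; assumption]. Qed.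

Lemma absent th m l t : th <> (0,0,0) -> billiard_well_defined th m -> coord th l = 0 -> ~ hits th m t l.
Proof. intros Hth Hwd H0 Hh. destruct (th_nonzero th Hth) as [l' Hl'].
  assert (l <> l') by (intro; subst; auto).
  apply (Hwd (- coord m l' / coord th l') l l' H).
  - unfold hits in *. rewrite H0 in *. rewrite Rmult_0_r in *. rewrite Rplus_0_r in *. auto.
  - unfold hits. exists 0%Z. field. auto. Qed.

Lemma uniq_letter th m t l1 l2 : billiard_well_defined th m -> hits th m t l1 -> hits th m t l2 -> l1 = l2.
Proof. intros Hwd H1 H2. destruct (letter_eq_dec l1 l2); auto. exfalso. eapply Hwd; eauto. Qed.

Definition time_of th m l (n : Z) : R := (IZR n - P th m l 0) / vel th l.

Lemma P_time th m l n : coord th l <> 0 -> P th m l (time_of th m l n) = IZR n.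
Proof. intros H. pose proof (vel_pos th l H). rewrite P_lin. unfold time_of. field. lra. Qed.

Lemma P_lt th m l a b : coord th l <> 0 -> (P th m l a < P th m l b <-> a < b).
Proof. intros H. pose proof (vel_pos th l H). rewrite (P_lin _ _ _ a), (P_lin _ _ _ b). split; intros; nra. Qed.

Lemma P_le th m l a b : coord th l <> 0 -> (P th m l a <= P th m l b <-> a <= b).
Proof. intros H. pose proof (vel_pos th l H). rewrite (P_lin _ _ _ a), (P_lin _ _ _ b). split; intros; nra. Qed.

Lemma hits_time th m l n : coord th l <> 0 -> hits th m (time_of th m l n) l.
Proof. intros H. apply hits_P. rewrite P_time by auto. exists n; auto. Qed.

Definition nx th m l s : R := time_of th m l (up (P th m l s)).

Lemma nx_hit th m l s : coord th l <> 0 -> hits th m (nx th m l s) l.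
Proof. intros; apply hits_time; auto. Qed.

Lemma nx_gt th m l s : coord th l <> 0 -> s < nx th m l s.
Proof. intros H. apply (P_lt th m l); auto. unfold nx. rewrite P_time by auto. apply archimed. Qed.

Lemma up_le x n : x < IZR n -> (up x <= n)%Z.
Proof. intros H. pose proof (archimed x) as [_ H2].
  assert (up x < n + 1)%Z by (apply lt_IZR; rewrite plus_IZR; simpl; lra). lia. Qed.

Lemma nx_min th m l s t : coord th l <> 0 -> s < t -> hits th m t l -> nx th m l s <= t.
Proof. intros H Hst Ht. apply hits_P in Ht. destruct Ht as [n Hn].
  apply (P_le th m l); auto. unfold nx. rewrite P_time by auto. rewrite Hn. apply IZR_le. apply up_le.
  rewrite <- Hn. apply P_lt; auto. Qed.

Definition ol th m l s : option R := if Req_EM_T (coord th l) 0 then None else Some (nx th m l s).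

Definition omin (a b : option R) : option R :=
  match a, b with None, x => x | x, None => x | Some x, Some y => Some (Rmin x y) end.

Lemma omin_spec a b : (a = None /\ b = None /\ omin a b = None) \/
  (exists x, omin a b = Some x /\ (a = Some x \/ b = Some x) /\ (forall y, a = Some y -> x <= y) /\ (forall y, b = Some y -> x <= y)).
Proof. destruct a as [x|]; destruct b as [y|]; simpl.
  - right. exists (Rmin x y). split; auto. split. unfold Rmin; destruct Rle_dec; auto.
    split; intros z Hz; inversion Hz; subst. apply Rmin_l. apply Rmin_r.
  - right. exists x. split; auto. split; auto. split; intros z Hz; inversion Hz; lra.
  - right. exists y. split; auto. split; auto. split; intros z Hz; inversion Hz; lra.
  - left; auto. Qed.

Definition next th m s : R :=
  match omin (ol th m la s) (omin (ol th m lb s) (ol th m lc s)) with Some x => x | None => 0 end.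

Lemma next_spec th m s : th <> (0,0,0) ->
  (exists l, coord th l <> 0 /\ next th m s = nx th m l s) /\
  (forall l, coord th l <> 0 -> next th m s <= nx th m l s).
Proof. intros Hth. destruct (th_nonzero th Hth) as [l0 Hl0].
  assert (Hol : forall l, coord th l <> 0 -> ol th m l s = Some (nx th m l s)).
  { intros l Hl. unfold ol. destruct Req_EM_T; tauto. }
  assert (Hol' : forall l x, ol th m l s = Some x -> coord th l <> 0 /\ x = nx th m l s).
  { intros l x. unfold ol. destruct Req_EM_T. discriminate. intros E0; inversion E0; auto. }
  unfold next.
  destruct (omin_spec (ol th m lb s) (ol th m lc s)) as [[Hb [Hc Ho]]|[x [Ho [Hx [Hxb Hxc]]]]].
  - rewrite Ho. destruct (ol th m la s) eqn:Ha; simpl.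
    + apply Hol' in Ha. destruct Ha as [Ha ->]. split. exists la; auto.
      intros l Hl. destruct l. lra. rewrite Hol in Hb by auto; discriminate. rewrite Hol in Hc by auto; discriminate.
    + exfalso. destruct l0. rewrite Hol in Ha by auto; discriminate. rewrite Hol in Hb by auto; discriminate. rewrite Hol in Hc by auto; discriminate.
  - rewrite Ho.
    destruct (omin_spec (ol th m la s) (Some x)) as [[_ [Hn _]]|[z [Hz [Hzx [Hza Hzo]]]]]. discriminate.
    rewrite Hz. pose proof (Hzo x eq_refl) as Hzx'.
    split.
    + destruct Hzx as [Hzx|Hzx]. apply Hol' in Hzx. destruct Hzx. exists la; auto.
      inversion Hzx; subst z. destruct Hx as [Hx|Hx]; apply Hol' in Hx; destruct Hx. exists lb; auto. exists lc; auto.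
    + intros l Hl. destruct l.
      * apply Hza. apply Hol; auto.
      * eapply Rle_trans; [exact Hzx'|]. apply Hxb. apply Hol; auto.
      * eapply Rle_trans; [exact Hzx'|]. apply Hxc. apply Hol; auto. Qed.

Fixpoint Tn th m k : R := match k with O => 0 | S k => next th m (Tn th m k) end.

Lemma Tn_hit th m k : th <> (0,0,0) -> on_cube_boundary m -> exists l, hits th m (Tn th m k) l.
Proof. intros Hth Hm. destruct k; simpl.
  - destruct Hm as [_ [l Hl]]. exists l. unfold hits. rewrite Rmult_0_l, Rplus_0_r.
    destruct Hl as [-> | ->]. exists 0%Z; auto. exists 1%Z; auto.
  - destruct (next_spec th m (Tn th m k) Hth) as [[l [Hl ->]] _]. exists l. apply nx_hit; auto. Qed.

Lemma Tn_lt th m k : th <> (0,0,0) -> Tn th m k < Tn th m (S k).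
Proof. intros Hth. simpl. destruct (next_spec th m (Tn th m k) Hth) as [[l [Hl ->]] _]. apply nx_gt; auto. Qed.

Lemma Tn_nonneg th m k : th <> (0,0,0) -> 0 <= Tn th m k.
Proof. intros Hth. induction k. simpl; lra. pose proof (Tn_lt th m k Hth). lra. Qed.

Lemma Tn_gap th m k t l : th <> (0,0,0) -> billiard_well_defined th m ->
  Tn th m k < t < Tn th m (S k) -> ~ hits th m t l.
Proof. intros Hth Hwd [H1 H2] Hh. destruct (Req_dec (coord th l) 0) as [H0|H0].
  - eapply absent; eauto.
  - simpl in H2. destruct (next_spec th m (Tn th m k) Hth) as [_ Hmin].
    pose proof (Hmin l H0). pose proof (nx_min th m l _ t H0 H1 Hh). lra. Qed.

Definition Qc th m l t : Z := if Req_EM_T (coord th l) 0 then 0%Z else fl (P th m l t).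
Definition Cn th m t : Z := (Qc th m la t + Qc th m lb t + Qc th m lc t)%Z.

Lemma Qc_mono th m l s t : s <= t -> (Qc th m l s <= Qc th m l t)%Z.
Proof. intros H. unfold Qc. destruct Req_EM_T. lia. apply fl_mono. apply P_le; auto. Qed.

Lemma Qc_step th m l s : coord th l <> 0 -> (Qc th m l s + 1 <= Qc th m l (nx th m l s))%Z.
Proof. intros H. unfold Qc. destruct Req_EM_T; [tauto|]. unfold nx. rewrite P_time by auto.
  rewrite fl_IZR. unfold fl, Int_part. lia. Qed.

Lemma Cn_step th m k : th <> (0,0,0) -> (Cn th m (Tn th m k) + 1 <= Cn th m (Tn th m (S k)))%Z.
Proof. intros Hth. pose proof (Tn_lt th m k Hth) as Hlt. simpl in *.
  destruct (next_spec th m (Tn th m k) Hth) as [[l [Hl Hn]] _]. rewrite Hn in *.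
  pose proof (Qc_step th m l (Tn th m k) Hl).
  unfold Cn. pose proof (Qc_mono th m la _ _ (Rlt_le _ _ Hlt)).
  pose proof (Qc_mono th m lb _ _ (Rlt_le _ _ Hlt)). pose proof (Qc_mono th m lc _ _ (Rlt_le _ _ Hlt)).
  destruct l; lia. Qed.

Lemma Cn_lower th m k : th <> (0,0,0) -> (Cn th m 0 + Z.of_nat k <= Cn th m (Tn th m k))%Z.
Proof. intros Hth. induction k. simpl. lia. pose proof (Cn_step th m k Hth). lia. Qed.

Lemma Cn_mono th m s t : s <= t -> (Cn th m s <= Cn th m t)%Z.
Proof. intros H. unfold Cn. pose proof (Qc_mono th m la _ _ H). pose proof (Qc_mono th m lb _ _ H).
  pose proof (Qc_mono th m lc _ _ H). lia. Qed.

Lemma Tn_cover th m t l : th <> (0,0,0) -> billiard_well_defined th m -> 0 <= t -> hits th m t l ->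
  exists k, Tn th m k = t.
Proof. intros Hth Hwd Ht Hh.
  assert (HK : exists K, t < Tn th m K).
  { apply NNPP. intros Hn.
    set (K := S (Z.to_nat (Cn th m t - Cn th m 0))).
    assert (Tn th m K <= t) by (apply Rnot_lt_le; intro; apply Hn; eauto).
    pose proof (Cn_lower th m K Hth). pose proof (Cn_mono th m _ _ H). unfold K in *. lia. }
  destruct HK as [K HK].
  assert (Hex : exists k, Tn th m k <= t < Tn th m (S k)).
  { induction K. simpl in HK. lra. destruct (Rlt_dec t (Tn th m K)). auto. exists K. lra. }
  destruct Hex as [k [H1 H2]]. exists k. destruct H1 as [H1|H1]; auto.
  exfalso. eapply Tn_gap; eauto. Qed.

Theorem bw_exists th m : th <> (0,0,0) -> on_cube_boundary m -> billiard_well_defined th m ->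
  exists u, is_billiard_word th m u.
Proof. intros Hth Hm Hwd.
  set (u := fun k => if excluded_middle_informative (hits th m (Tn th m k) la) then la
                     else if excluded_middle_informative (hits th m (Tn th m k) lb) then lb else lc).
  exists u, (Tn th m). split; [|split; [|split]].
  - intros k. apply Tn_lt; auto.
  - intros k. apply Tn_nonneg; auto.
  - intros k. unfold u. destruct (Tn_hit th m k Hth Hm) as [l Hl].
    destruct excluded_middle_informative; auto. destruct excluded_middle_informative; auto.
    destruct l; tauto.
  - intros t l Ht Hh. eapply Tn_cover; eauto. Qed.
Open Scope R_scope.

Definition BW (th m : R3) (T : nat -> R) (u : nat -> letter) : Prop :=
    (forall k, T k < T (S k)) /\
    (forall k, 0 <= T k) /\
    (forall k, hits th m (T k) (u k)) /\
    (forall (t : R) (l : letter), 0 <= t -> hits th m t l -> exists k, T k = t).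

Lemma T_mono th m T u j k : BW th m T u -> (j < k)%nat -> T j < T k.
Proof. intros [HT _] H. induction H. apply HT. pose proof (HT m0). lra. Qed.

Lemma T_le th m T u j k : BW th m T u -> (j <= k)%nat -> T j <= T k.
Proof. intros HB H. destruct (Nat.eq_dec j k). subst; lra. left. eapply T_mono; eauto. lia. Qed.

Lemma T_inv th m T u j k : BW th m T u -> T j < T k -> (j < k)%nat.
Proof. intros HB H. destruct (le_lt_dec k j); auto. pose proof (T_le th m T u k j HB l). lra. Qed.

Lemma T_gap th m T u j t l : BW th m T u -> T j < t < T (S j) -> ~ hits th m t l.
Proof. intros HB [H1 H2] Hh. pose proof HB as [_ [H0 [_ Hc]]].
  destruct (Hc t l) as [k <-]; auto. pose proof (H0 j). lra.
  pose proof (T_inv _ _ _ _ _ _ HB H1). pose proof (T_inv _ _ _ _ _ _ HB H2). lia. Qed.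

Lemma T_before th m T u t l : BW th m T u -> 0 <= t < T 0%nat -> ~ hits th m t l.
Proof. intros HB [H1 H2] Hh. pose proof HB as [_ [_ [_ Hc]]].
  destruct (Hc t l) as [k <-]; auto. pose proof (T_le th m T u 0 k HB ltac:(lia)). lra. Qed.

Lemma u_of th m T u k l : BW th m T u -> billiard_well_defined th m -> hits th m (T k) l -> u k = l.
Proof. intros HB Hwd Hh. pose proof HB as [_ [_ [Hu _]]]. eapply uniq_letter; eauto. Qed.

Fixpoint cnt (l : letter) (u : nat -> letter) (j : nat) : nat :=
  match j with O => O | S j' => (cnt l u j' + if letter_eq_dec (u j') l then 1 else 0)%nat end.

Lemma count_nona_split u j : count_nona u j = (cnt lb u j + cnt lc u j)%nat.
Proof. induction j; simpl; auto. rewrite IHj. destruct (u j); simpl; lia. Qed.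

Lemma cnt_le_nona u j : (cnt lb u j <= count_nona u j)%nat.
Proof. rewrite count_nona_split. lia. Qed.

Lemma between_hit th m l a b n : coord th l <> 0 -> P th m l a < IZR n < P th m l b ->
  a < time_of th m l n < b /\ hits th m (time_of th m l n) l.
Proof. intros H [H1 H2]. rewrite <- (P_time th m l n H) in H1, H2.
  apply P_lt in H1; auto. apply P_lt in H2; auto. split. auto. apply hits_time; auto. Qed.

Lemma count_lemma th m T u l : BW th m T u -> billiard_well_defined th m -> coord th l <> 0 ->
  forall j, Z.of_nat (cnt l u j) = (cl (P th m l (T j)) - cl (P th m l 0))%Z.
Proof. intros HB Hwd Hl. pose proof HB as [HT [H0 [Hu Hc]]].
  induction j.
  - simpl. assert (HP : P th m l 0 <= P th m l (T 0%nat)) by (apply P_le; auto).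
    pose proof (cl_mono _ _ HP).
    destruct (Z.eq_dec (cl (P th m l (T 0%nat))) (cl (P th m l 0))) as [E|NE]. lia. exfalso.
    set (n := cl (P th m l 0)) in *. pose proof (cl_spec (P th m l 0)) as Hs0. pose proof (cl_spec (P th m l (T 0%nat))) as Hs1.
    fold n in Hs0.
    assert (Hlt : IZR n < P th m l (T 0%nat)).
    { assert (Hn1 : (n + 1 <= cl (P th m l (T 0%nat)))%Z) by lia. apply IZR_le in Hn1. rewrite plus_IZR in Hn1. simpl in Hn1. lra. }
    destruct (Req_dec (IZR n) (P th m l 0)) as [En|En].
    + apply (T_before th m T u 0 l HB). split. lra. apply (P_lt th m l); auto. lra.
      apply hits_P. exists n. auto.
    + destruct (between_hit th m l 0 (T 0%nat) n Hl) as [[Ha Hb] Hh]. lra.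
      eapply (T_before th m T u _ l HB); eauto. split; lra.
  - simpl. rewrite Nat2Z.inj_add, IHj.
    pose proof (HT j) as Hj. assert (HP : P th m l (T j) < P th m l (T (S j))) by (apply P_lt; auto).
    pose proof (cl_spec (P th m l (T j))) as S1. pose proof (cl_spec (P th m l (T (S j)))) as S2.
    destruct (letter_eq_dec (u j) l) as [Eu|Eu].
    + assert (Hi : is_int (P th m l (T j))) by (apply hits_P; rewrite <- Eu; auto).
      destruct Hi as [n0 Hn0]. rewrite Hn0 in *.
      assert (Cn0 : cl (IZR n0) = n0) by (rewrite cl_int by (exists n0; auto); apply fl_IZR). rewrite Cn0 in *.
      assert (Hge : (n0 + 1 <= cl (P th m l (T (S j))))%Z).
      { apply Zlt_le_succ. apply lt_IZR. lra. }
      destruct (Z.eq_dec (cl (P th m l (T (S j)))) (n0 + 1)). simpl. lia. exfalso.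
      destruct (between_hit th m l (T j) (T (S j)) (n0 + 1) Hl) as [Hb Hh].
      { split. rewrite plus_IZR, <- Hn0. simpl. lra.
        assert (H2 : (n0 + 2 <= cl (P th m l (T (S j))))%Z) by lia. apply IZR_le in H2. rewrite plus_IZR in *. simpl in *. lra. }
      eapply T_gap; eauto.
    + assert (Hni : ~ is_int (P th m l (T j))).
      { intros Hi. apply Eu. apply (u_of th m T u j l HB Hwd). apply hits_P; auto. }
      set (c1 := cl (P th m l (T j))) in *.
      assert (Hne : IZR c1 <> P th m l (T j)) by (intro E; apply Hni; exists c1; auto).
      pose proof (cl_mono _ _ (Rlt_le _ _ HP)) as Hm.
      destruct (Z.eq_dec (cl (P th m l (T (S j)))) c1). simpl. lia. exfalso.
      destruct (between_hit th m l (T j) (T (S j)) c1 Hl) as [Hb Hh].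
      { split. lra. assert (H2 : (c1 + 1 <= cl (P th m l (T (S j))))%Z) by (unfold c1 in *; lia).
        apply IZR_le in H2. rewrite plus_IZR in *. simpl in *. lra. }
      eapply T_gap; eauto. Qed.
Open Scope R_scope.

Lemma fr_nonint x : ~ is_int x -> 0 < fr x < 1.
Proof. intros H. pose proof (fr_range x). split; [|lra].
  destruct (Req_dec (fr x) 0) as [E|]; [|lra]. exfalso. apply H. exists (fl x). unfold fr in E. lra. Qed.

Lemma div_lt1 a c : 0 < a -> a < c -> a / c < 1.
Proof. intros. apply Rmult_lt_reg_r with c; [lra|]. unfold Rdiv. rewrite Rmult_assoc, Rinv_l by lra. lra. Qed.

Lemma alg_b b g x y N K : 0 < b -> 0 < g -> (fl x + fl y)%Z = N -> g * x - b * y = K ->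
  is_int x -> ~ is_int y ->
  fl (b / (b + g) * IZR N + K / (b + g) + b / (b + g)) <> fl (b / (b + g) * IZR N + K / (b + g)).
Proof. intros Hb Hg HN HK [n Hx] Hy.
  pose proof (fr_nonint y Hy) as He. set (e := fr y) in *.
  assert (Hfx : fl x = n) by (rewrite Hx; apply fl_IZR).
  assert (Hyy : y = IZR (N - n) + e) by (unfold e, fr; rewrite <- HN, Hfx, minus_IZR, plus_IZR; ring).
  set (al := b / (b + g)).
  assert (Hal : 0 < al < 1) by (unfold al; split; [apply Rdiv_lt_0_compat; lra| apply div_lt1; lra]).
  assert (Hyk : al * IZR N + K / (b + g) = IZR n - al * e).
  { unfold al. rewrite <- HK, Hyy, Hx, minus_IZR. field. lra. }
  rewrite Hyk.
  assert (0 < al * e < al) by (split; nra).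
  rewrite (fl_unique (IZR n - al * e) (n - 1)) by (rewrite minus_IZR; simpl; lra).
  rewrite (fl_unique (IZR n - al * e + al) n). lia.
  assert (0 < al * (1 - e)) by nra. split; nra. Qed.

Lemma alg_c b g x y N K : 0 < b -> 0 < g -> (fl x + fl y)%Z = N -> g * x - b * y = K ->
  is_int y -> ~ is_int x ->
  fl (b / (b + g) * IZR N + K / (b + g) + b / (b + g)) = fl (b / (b + g) * IZR N + K / (b + g)).
Proof. intros Hb Hg HN HK [n Hy] Hx.
  pose proof (fr_nonint x Hx) as He. set (e := fr x) in *.
  assert (Hfy : fl y = n) by (rewrite Hy; apply fl_IZR).
  assert (Hxx : x = IZR (N - n) + e) by (unfold e, fr; rewrite <- HN, Hfy, minus_IZR, plus_IZR; ring).
  set (c := g / (b + g)).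
  assert (Hc : 0 < c < 1) by (unfold c; split; [apply Rdiv_lt_0_compat; lra| apply div_lt1; lra]).
  assert (Hyk : b / (b + g) * IZR N + K / (b + g) = IZR (N - n) + c * e).
  { unfold c. rewrite <- HK, Hy, Hxx, minus_IZR. field. lra. }
  assert (Hal : b / (b + g) = 1 - c) by (unfold c; field; lra).
  rewrite Hyk, Hal.
  assert (0 < c * e < c) by (split; nra).
  rewrite (fl_unique (IZR (N - n) + c * e) (N - n)) by lra.
  rewrite (fl_unique (IZR (N - n) + c * e + (1 - c)) (N - n)). auto. lra. Qed.

Definition bb th := vel th lb.
Definition gg th := vel th lc.
Definition alpha th := bb th / (bb th + gg th).
Definition rho th m := alpha th * (IZR (cl (P th m lb 0) + cl (P th m lc 0)) - 1)
                       + (gg th * P th m lb 0 - bb th * P th m lc 0) / (bb th + gg th).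

Lemma W_formula th m T u w : billiard_well_defined th m -> BW th m T u ->
  coord th lb <> 0 -> coord th lc <> 0 -> erase_a u w ->
  forall k, w k = letter_of (alpha th) (rho th m + INR k * alpha th).
Proof. intros Hwd HB Hb Hc He k.
  destruct (He k) as [j [Hja [Hjk Hw]]]. rewrite Hw.
  pose proof HB as [_ [_ [Hu _]]].
  pose proof (count_lemma th m T u lb HB Hwd Hb j) as Cb.
  pose proof (count_lemma th m T u lc HB Hwd Hc j) as Cc.
  rewrite count_nona_split in Hjk.
  set (x := P th m lb (T j)) in *. set (y := P th m lc (T j)) in *.
  assert (HK : gg th * x - bb th * y = gg th * P th m lb 0 - bb th * P th m lc 0).
  { unfold x, y, gg, bb. rewrite (P_lin th m lb), (P_lin th m lc). ring. }
  pose proof (vel_pos th lb Hb). pose proof (vel_pos th lc Hc).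
  set (N := (Z.of_nat k + cl (P th m lb 0) + cl (P th m lc 0) - 1)%Z).
  assert (Hrho : rho th m + INR k * alpha th = alpha th * IZR N + (gg th * P th m lb 0 - bb th * P th m lc 0) / (bb th + gg th)).
  { unfold rho, N. rewrite !minus_IZR, !plus_IZR, <- INR_IZR. simpl. ring. }
  rewrite Hrho. unfold letter_of, alpha.
  assert (Hxi : is_int x <-> u j = lb).
  { split. intros Hi. apply (u_of th m T u j lb HB Hwd). apply hits_P. auto.
    intros E. apply hits_P. rewrite <- E. auto. }
  assert (Hyi : is_int y <-> u j = lc).
  { split. intros Hi. apply (u_of th m T u j lc HB Hwd). apply hits_P. auto.
    intros E. apply hits_P. rewrite <- E. auto. }
  destruct (u j) eqn:Euj; [tauto| |].
  - assert (Ix : is_int x) by tauto. assert (Iy : ~ is_int y) by (rewrite Hyi; discriminate).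
    rewrite (cl_int x Ix) in Cb. rewrite (cl_nonint y Iy) in Cc.
    assert (HN : (fl x + fl y)%Z = N) by (unfold N; lia).
    pose proof (alg_b (bb th) (gg th) x y N _ H H0 HN HK Ix Iy).
    destruct Z.eq_dec; [contradiction|auto].
  - assert (Iy : is_int y) by tauto. assert (Ix : ~ is_int x) by (rewrite Hxi; discriminate).
    rewrite (cl_int y Iy) in Cc. rewrite (cl_nonint x Ix) in Cb.
    assert (HN : (fl x + fl y)%Z = N) by (unfold N; lia).
    pose proof (alg_c (bb th) (gg th) x y N _ H H0 HN HK Iy Ix).
    destruct Z.eq_dec; [auto|contradiction]. Qed.
Open Scope R_scope.

Lemma Q2R_inject z : Q2R (inject_Z z) = IZR z.
Proof. unfold Q2R. simpl. rewrite Rinv_1. ring. Qed.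

Lemma Qeq_inject0 z : (inject_Z z == 0)%Q <-> z = 0%Z.
Proof. unfold Qeq. simpl. lia. Qed.

Lemma indep_nonzero x y : Q_lin_indep x y -> x <> 0 /\ y <> 0.
Proof. intros H. split; intros E.
  - destruct (H 1%Q 0%Q) as [H1 _]. rewrite E. lra. discriminate H1.
  - destruct (H 0%Q 1%Q) as [_ H1]. rewrite E. lra. discriminate H1. Qed.

Lemma coord_vel th l : coord th l = IZR (sg (coord th l)) * vel th l.
Proof. unfold vel. rewrite <- Rmult_assoc, sg_sq. ring. Qed.

Lemma alpha_range th : coord th lb <> 0 -> coord th lc <> 0 -> 0 < alpha th < 1.
Proof. intros Hb Hc. pose proof (vel_pos th lb Hb). pose proof (vel_pos th lc Hc). unfold alpha, bb, gg.
  split. apply Rdiv_lt_0_compat; lra. apply div_lt1; lra. Qed.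

Lemma indep_irr th : coord th lb <> 0 -> coord th lc <> 0 -> Q_lin_indep (coord th lb) (coord th lc) -> irr (alpha th).
Proof. intros Hb Hc Hq j n Hj E0. pose proof (vel_pos th lb Hb). pose proof (vel_pos th lc Hc).
  unfold alpha, bb, gg in E0.
  assert (E1 : IZR (j - n) * vel th lb - IZR n * vel th lc = 0).
  { rewrite minus_IZR. apply (Rmult_eq_compat_r (vel th lb + vel th lc)) in E0.
    field_simplify in E0; [|lra]. lra. }
  pose proof (coord_vel th lb) as Hb'. pose proof (coord_vel th lc) as Hc'.
  pose proof (sg_sq (coord th lb)) as S2. pose proof (sg_sq (coord th lc)) as S3.
  pose proof (sg_ne (coord th lb)) as N2. pose proof (sg_ne (coord th lc)) as N3.
  set (s2 := sg (coord th lb)) in *. set (s3 := sg (coord th lc)) in *.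
  destruct (Hq (inject_Z ((j - n) * s2)) (inject_Z (- n * s3))) as [Q1 Q2].
  { rewrite !Q2R_inject, !mult_IZR, opp_IZR.
    rewrite Hb', Hc'.
    replace (IZR (j - n) * IZR s2 * (IZR s2 * vel th lb) +
             - IZR n * IZR s3 * (IZR s3 * vel th lc))
      with ((IZR s2 * IZR s2) * (IZR (j - n) * vel th lb) -
            (IZR s3 * IZR s3) * (IZR n * vel th lc)) by ring.
    rewrite S2, S3. lra. }
  apply (proj1 (Qeq_inject0 _)) in Q1. apply (proj1 (Qeq_inject0 _)) in Q2.
  apply Z.mul_eq_0 in Q1. apply Z.mul_eq_0 in Q2. lia. Qed.

Lemma dep_rat th : coord th lb <> 0 -> coord th lc <> 0 -> ~ Q_lin_indep (coord th lb) (coord th lc) ->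
  exists j n, j <> 0%Z /\ IZR j * alpha th = IZR n.
Proof. intros Hb Hc Hq. pose proof (vel_pos th lb Hb). pose proof (vel_pos th lc Hc).
  apply NNPP. intros Hn. apply Hq. intros [a d] [a' d'] E0.
  unfold Q2R in E0. simpl in E0. unfold Qeq. simpl.
  assert (Hd : IZR (Z.pos d) > 0) by (apply IZR_lt; lia).
  assert (Hd' : IZR (Z.pos d') > 0) by (apply IZR_lt; lia).
  assert (E1 : IZR (a * Z.pos d') * coord th lb + IZR (a' * Z.pos d) * coord th lc = 0).
  { rewrite !mult_IZR. apply (Rmult_eq_compat_r (IZR (Z.pos d) * IZR (Z.pos d'))) in E0.
    field_simplify in E0; try lra. }
  set (A1 := (a * Z.pos d')%Z) in *. set (B1 := (a' * Z.pos d)%Z) in *.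
  rewrite (coord_vel th lb), (coord_vel th lc) in E1.
  set (Pz := (A1 * sg (coord th lb))%Z). set (Qz := (B1 * sg (coord th lc))%Z).
  assert (E2 : IZR Pz * vel th lb + IZR Qz * vel th lc = 0) by (unfold Pz, Qz; rewrite !mult_IZR; lra).
  pose proof (sg_ne (coord th lb)). pose proof (sg_ne (coord th lc)).
  destruct (Z.eq_dec Pz 0) as [HP|HP].
  { rewrite HP in E2. assert (IZR Qz = 0) by nra. apply eq_IZR in H3.
    assert (A1 = 0%Z) by (unfold Pz in HP; nia). assert (B1 = 0%Z) by (unfold Qz in H3; nia).
    unfold A1, B1 in *. split; lia. }
  exfalso. apply Hn. exists (Qz - Pz)%Z, Qz. split.
  - intro E3. assert (Qz = Pz) by lia. rewrite H3 in E2. assert (IZR Pz = 0) by nra. apply eq_IZR in H4. lia.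
  - unfold alpha, bb, gg. rewrite minus_IZR. field_simplify; [|lra]. 
    apply (Rmult_eq_reg_r (vel th lb + vel th lc)); [|lra]. field_simplify; try lra. Qed.

Lemma letter_shift al y n : letter_of al (y + IZR n) = letter_of al y.
Proof. unfold letter_of. replace (y + IZR n + al) with ((y + al) + IZR n) by ring.
  rewrite !fl_shift. destruct (Z.eq_dec (fl (y + al) + n) (fl y + n)); destruct (Z.eq_dec (fl (y + al)) (fl y)); auto; lia. Qed.

Lemma rat_periodic al rho (w : nat -> letter) : (exists j n, j <> 0%Z /\ IZR j * al = IZR n) ->
  (forall k, w k = letter_of al (rho + INR k * al)) -> exists J, (1 <= J)%nat /\ forall k, w (k + J)%nat = w k.
Proof. intros [j [n [Hj E0]]] Hw.
  assert (HJ : exists J n', (1 <= J)%nat /\ INR J * al = IZR n').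
  { destruct (Z_lt_le_dec 0 j).
    - exists (Z.to_nat j), n. split. lia. rewrite INR_IZR, Z2Nat.id by lia. auto.
    - exists (Z.to_nat (- j)), (- n)%Z. split. lia. rewrite INR_IZR, Z2Nat.id by lia. rewrite !opp_IZR. lra. }
  destruct HJ as [J [n' [HJ1 HJ2]]]. exists J. split; auto. intros k. rewrite !Hw.
  rewrite plus_INR. replace (rho + (INR k + INR J) * al) with ((rho + INR k * al) + IZR n') by (rewrite <- HJ2; ring).
  apply letter_shift. Qed.

Lemma w_exists th m T u : billiard_well_defined th m -> BW th m T u -> coord th lb <> 0 ->
  exists w, erase_a u w.
Proof. intros Hwd HB Hb. pose proof HB as [HT [H0 [Hu Hc]]].
  assert (Unb : forall K, exists j, (K <= count_nona u j)%nat).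
  { intros K. set (n := (cl (P th m lb 0) + Z.of_nat K)%Z).
    assert (Hs : 0 <= time_of th m lb n).
    { apply (P_le th m lb); auto. rewrite P_time by auto. pose proof (cl_spec (P th m lb 0)).
      unfold n. rewrite plus_IZR. pose proof (pos_INR K). rewrite INR_IZR in H1. lra. }
    destruct (Hc _ lb Hs (hits_time th m lb n Hb)) as [j Hj]. exists j.
    pose proof (count_lemma th m T u lb HB Hwd Hb j). rewrite Hj, P_time in H by auto.
    rewrite cl_int in H by (exists n; auto). rewrite fl_IZR in H. unfold n in H.
    pose proof (cnt_le_nona u j). lia. }
  assert (IVT : forall N k, (k < count_nona u N)%nat -> exists j, u j <> la /\ count_nona u j = k).
  { induction N; intros k Hk. simpl in Hk. lia.
    destruct (lt_dec k (count_nona u N)). auto.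
    exists N. simpl in Hk. destruct (u N) eqn:EuN; simpl in Hk.
    - lia.
    - split. discriminate. lia.
    - split. discriminate. lia. }
  assert (Hex : forall k, exists j, u j <> la /\ count_nona u j = k).
  { intros k. destruct (Unb (S k)) as [N HN]. apply (IVT N). lia. }
  exists (fun k => u (proj1_sig (constructive_indefinite_description _ (Hex k)))).
  intros k. destruct (constructive_indefinite_description _ (Hex k)) as [j [Hj1 Hj2]]. simpl.
  exists j. auto. Qed.

Lemma BW_of th m u : is_billiard_word th m u -> exists T, BW th m T u.
Proof. intros [T H]. exists T. exact H. Qed.

Theorem corollary1 (theta m : R3) :
  theta <> (0, 0, 0) ->
  on_cube_boundary m ->
  billiard_well_defined theta m ->
  (delta_a_sturmian (billiard_word theta m) <->
   Q_lin_indep (coord theta lb) (coord theta lc)).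
Proof. intros Hth Hm Hwd.
  assert (Hbw : is_billiard_word theta m (billiard_word theta m)).
  { unfold billiard_word. apply epsilon_spec. apply bw_exists; auto. }
  destruct (BW_of _ _ _ Hbw) as [T HB]. set (u := billiard_word theta m) in *.
  pose proof HB as [HT [H0 [Hu Hc]]].
  split.
  - intros [w [He Hs]]. apply NNPP. intros Hni.
    destruct (Req_dec (coord theta lb) 0) as [Hb|Hb].
    + assert (Hw : forall k, w k = lc).
      { intros k. destruct (He k) as [j [Hj1 [_ Hj3]]]. rewrite Hj3.
        destruct (u j) eqn:E0; auto. contradiction. exfalso. eapply (absent theta m lb (T j)); eauto. rewrite <- E0. auto. }
      apply (periodic_not_sturm w 1); auto. intros k. rewrite !Hw. auto.
    + destruct (Req_dec (coord theta lc) 0) as [Hc0|Hc0].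
      * assert (Hw : forall k, w k = lb).
        { intros k. destruct (He k) as [j [Hj1 [_ Hj3]]]. rewrite Hj3.
          destruct (u j) eqn:E0; auto. contradiction. exfalso. eapply (absent theta m lc (T j)); eauto. rewrite <- E0. auto. }
        apply (periodic_not_sturm w 1); auto. intros k. rewrite !Hw. auto.
      * pose proof (W_formula theta m T u w Hwd HB Hb Hc0 He) as Hf.
        destruct (rat_periodic _ _ w (dep_rat theta Hb Hc0 Hni) Hf) as [J [HJ HJp]].
        apply (periodic_not_sturm w J); auto.
  - intros Hq. destruct (indep_nonzero _ _ Hq) as [Hb Hc0].
    destruct (w_exists theta m T u Hwd HB Hb) as [w He].
    exists w. split; auto.
    apply (rot_sturm (alpha theta) (rho theta m)).
    + apply alpha_range; auto.
    + apply indep_irr; auto.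
    + apply (W_formula theta m T u w Hwd HB Hb Hc0 He). Qed.
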